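(* Let $\mathcal{H}$ be the Hilbert space described in the context and $p\in[1,\infty)$. Let $\mu$ be a Borel probability measure on $\mathcal{H}$ such that for some $s>2p$, $$\widetilde{M}_s(\mu):=\int \Big(\sum_{j=1}^{\infty}\frac{1}{\lambda_j^2}\langle x, \psi_j\rangle^2_{L^2} \Big)^{\frac{s}{2}}\,\mu(dx) <\infty,$$ and assume there are constants $C>0$, $\gamma>1$ with $\lambda_j\le Cj^{-\gamma}$ for all $j\ge1$. Then $$\int_{\mathcal{H}} \|\mathrm{Proj}^d (x)-x\|^q_{\mathcal{H}}\,\mu(dx) \leq C d^{-\frac{q\gamma}{2}}$$ for all $d\geq 1$ and all $q\in [1,s]$, where the constant $C$ depends only on $q$ and $\widetilde{M}_s(\mu)$.
   Context: Let $(\Omega,m)$ be a measure space, $(\psi_j)_{j\ge1}$ an orthonormal basis of $L^2(\Omega,m)$ with inner product $\langle\cdot,\cdot\rangle_{L^2}$, and $(\lambda_j)_{j\ge1}$ a non-increasing sequence of positive numbers converging to $0$. Let $\mathcal{H}=\{f\in L^2(\Omega,m):\sum_j\langle f,\psi_j\rangle_{L^2}^2/\lambda_j<\infty\}$ with inner product $\langle f,g\rangle_{\mathcal{H}}=\sum_j\lambda_j^{-1}\langle f,\psi_j\rangle_{L^2}\langle g,\psi_j\rangle_{L^2}$ and norm $\|\cdot\|_{\mathcal{H}}$. $\mathrm{Proj}^d$ is the orthogonal projection onto $\mathrm{span}\{\sqrt{\lambda_j}\psi_j:j=1,\dots,d\}$. *)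

(* Defs.v *)
From HB Require Import structures.
From mathcomp Require Import all_boot all_order all_algebra.
From mathcomp Require Import all_classical all_reals all_analysis.
Set Implicit Arguments. Unset Strict Implicit. Unset Printing Implicit Defensive.
Import Order.TTheory GRing.Theory Num.Theory.
Import numFieldNormedType.Exports.
Local Open Scope classical_set_scope.
Local Open Scope ring_scope.

Section Defs.
Context {dT : measure_display} {T : measurableType dT} {R : realType}.
Variable m : {measure set T -> \bar R}.

Definition L2 (f : T -> R) : Prop :=
  measurable_fun setT f /\ m.-integrable setT (fun t => (f t ^+ 2)%:E).

Definition L2inner (f g : T -> R) : R := \int[m]_t (f t * g t).

Definition ONB (psi : nat -> T -> R) : Prop :=
  (forall j, L2 (psi j)) /\
  (forall i j, L2inner (psi i) (psi j) = (i == j)%:R) /\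
  (forall f, L2 f -> (forall j, L2inner f (psi j) = 0) ->
     m.-negligible [set t | f t != 0]).

Variables (psi : nat -> T -> R) (lam : nat -> R).

Definition coef (f : T -> R) (j : nat) : R := L2inner f (psi j).

Definition inH (f : T -> R) : Prop :=
  L2 f /\ (\sum_(j <oo) ((coef f j ^+ 2 / lam j)%:E) < +oo)%E.

Definition Hinner (f g : T -> R) : R :=
  limn (series (fun j => coef f j * coef g j / lam j)).

Definition Hnorm (f : T -> R) : R :=
  Num.sqrt (fine (\sum_(j <oo) ((coef f j ^+ 2 / lam j)%:E))%E).

(* H-orthonormal vectors sqrt(lam_j) psi_j (0-indexed) *)
Definition evec (j : nat) : T -> R := fun t => Num.sqrt (lam j) * psi j t.

(* Orthogonal projection (in H) onto span{ sqrt(lam_j) psi_j : j = 1..d },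
   i.e. 0-indexed j < d; written via the orthonormal family formula. *)
Definition Proj (d : nat) (f : T -> R) : T -> R :=
  fun t => \sum_(j < d) Hinner f (evec j) * evec j t.

(* the weighted moment  int (sum_j <x,psi_j>^2 / lam_j^2)^(s/2) mu(dx),
   for mu the law of the H-valued random element X under P *)
Definition Mtilde {dS : measure_display} {S : measurableType dS}
  (P : probability S R) (X : S -> T -> R) (s : R) : \bar R :=
  (\int[P]_w (poweR (\sum_(j <oo) ((coef (X w) j ^+ 2 / lam j ^+ 2)%:E)) (s / 2)))%E.

End Defs.

(* Main.v *)
Require Import Defs.
From HB Require Import structures.
From mathcomp Require Import all_boot all_order all_algebra.
From mathcomp Require Import all_classical all_reals all_analysis.
From mathcomp Require Import ring lra measurable_realfun.
Import Order.TTheory GRing.Theory Num.Theory.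
Import numFieldNormedType.Exports.
Local Open Scope classical_set_scope.
Local Open Scope ring_scope.
Section Aux.
Context {dT : measure_display} {T : measurableType dT} {R : realType}.
Variable m : {measure set T -> \bar R}.
Variables (psi : nat -> T -> R) (lam : nat -> R).
Hypothesis onb : ONB m psi.

Lemma int_prod f g : L2 m f -> L2 m g ->
  m.-integrable setT (EFin \o (fun t => f t * g t)).
Proof.
move=> [mf if2] [mg ig2].
apply: (le_integrable measurableT (g := fun t => (f t ^+ 2 + g t ^+ 2)%:E)).
- apply/measurable_EFinP; exact: measurable_funM.
- move=> t _ /=; rewrite lee_fin normrM (@ger0_norm _ (f t ^+ 2 + g t ^+ 2)) ?addr_ge0 ?sqr_ge0 //.
  rewrite -(real_normK (num_real (f t))) -(real_normK (num_real (g t))).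
  have := normr_ge0 (f t); have := normr_ge0 (g t); nra.
- rewrite (_ : (fun t => _) = (fun t => (f t ^+2)%:E) \+ (fun t => (g t ^+ 2)%:E))%E; last first.
    by apply/funext => t; rewrite /= EFinD.
  exact: integrableD.
Qed.

Lemma sum_delta (k : nat -> R) n (j : nat) :
  \sum_(i < n) k i * (val i == j)%:R = (j < n)%:R * k j.
Proof.
elim: n => [|n IH]; first by rewrite big_ord0 ltn0 mul0r.
rewrite big_ord_recr /= IH.
case: eqP => [<-|/eqP nj]; first by rewrite ltnn ltnSn mul0r add0r mulr1 mul1r.
by rewrite mulr0 addr0 ltnS (leq_eqVlt j n) (eq_sym j n) (negbTE nj).
Qed.

Lemma sum_psi (k : nat -> R) n (j : nat) :
  m.-integrable setT (EFin \o (fun t => (\sum_(i < n) k i * psi i t) * psi j t)) /\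
  Rintegral m setT (fun t => (\sum_(i < n) k i * psi i t) * psi j t)
    = \sum_(i < n) k i * (val i == j)%:R.
Proof.
have [L2p [orth _]] := onb.
elim: n => [|n [IHi IHe]].
  rewrite (_ : (fun t => _) = cst 0); last first.
    by apply/funext => t; rewrite big_ord0 mul0r.
  split; first exact: integrable0.
  by rewrite Rintegral_cst // mul0r big_ord0.
have E : (fun t => (\sum_(i < n.+1) k i * psi i t) * psi j t) =
   (fun t => (\sum_(i < n) k i * psi i t) * psi j t + k n * (psi n t * psi j t)).
  by apply/funext => t; rewrite big_ord_recr /= mulrDl mulrA.
have ip := int_prod _ _ (L2p n) (L2p j).
have ip2 : m.-integrable setT (EFin \o (fun t => k n * (psi n t * psi j t))).
  suff -> : (EFin \o (fun t => k n * (psi n t * psi j t))) =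
     (fun x => ((k n)%:E * (EFin \o (fun t => (psi n t * psi j t)%R)) x)%E).
    exact: integrableZl.
  by apply/funext => x /=; rewrite EFinM.
rewrite E; split.
  pose F := EFin \o (fun t => (\sum_(i < n) k i * psi i t) * psi j t).
  pose G := EFin \o (fun t => k n * (psi n t * psi j t)).
  rewrite (_ : EFin \o _ = (F \+ G)%E); last by apply/funext => t /=; rewrite EFinD.
  exact: integrableD.
rewrite RintegralD // IHe RintegralZl // big_ord_recr /=.
by have := orth n j; rewrite /L2inner => ->.
Qed.

End Aux.
Section Aux2.
Context {dT : measure_display} {T : measurableType dT} {R : realType}.
Variable m : {measure set T -> \bar R}.
Variables (psi : nat -> T -> R) (lam : nat -> R).
Hypothesis onb : ONB m psi.
Hypothesis lampos : forall j, 0 < lam j.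

Lemma coef_evec i k : coef m psi (evec psi lam i) k = Num.sqrt (lam i) * (k == i)%:R.
Proof.
have [L2p [orth _]] := onb.
rewrite /coef /L2inner /evec.
rewrite (_ : (fun t => _) = (fun t => Num.sqrt (lam i) * (psi i t * psi k t))); last first.
  by apply/funext => t; rewrite mulrA.
rewrite RintegralZl //; last exact: int_prod.
by have := orth i k; rewrite /L2inner => ->; rewrite eq_sym.
Qed.

Lemma Hinner_evec f i :
  Hinner m psi lam f (evec psi lam i) = coef m psi f i * Num.sqrt (lam i) / lam i.
Proof.
rewrite /Hinner; apply: cvg_lim; first exact: Rhausdorff. apply: cvg_near_cst; near=> n.
have hn : (i < n)%N by near: n; exact: nbhs_infty_gt.
rewrite /series /=.
transitivity (\sum_(0 <= k < n) (coef m psi f k * Num.sqrt (lam i) / lam k) * (k == i)%:R).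
  by apply: eq_bigr => k _; rewrite coef_evec; ring.
by rewrite big_mkord (sum_delta (fun k => coef m psi f k * Num.sqrt (lam i) / lam k)) hn mul1r.
Unshelve. all: by end_near.
Qed.

Lemma Proj_eq d f : Proj m psi lam d f =
  fun t => \sum_(i < d) (Hinner m psi lam f (evec psi lam i) * Num.sqrt (lam i)) * psi i t.
Proof.
by apply/funext => t; rewrite /Proj; apply: eq_bigr => i _; rewrite /evec mulrA.
Qed.

Lemma coef_Proj f d j : coef m psi (Proj m psi lam d f) j = (j < d)%:R * coef m psi f j.
Proof.
rewrite Proj_eq /coef /L2inner /= (proj2 (sum_psi m psi onb (fun i => Hinner m psi lam f (evec psi lam i) * Num.sqrt (lam i)) d j)) (sum_delta (fun i => Hinner m psi lam f (evec psi lam i) * Num.sqrt (lam i))) Hinner_evec.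
congr (_ * _).
have -> : forall c s l : R, c * s / l * s = c * (s ^+ 2) / l by move=> *; ring.
by rewrite sqr_sqrtr ?ltW // mulfK ?gt_eqF.
Qed.

Lemma coef_diff f d j : L2 m f ->
  coef m psi (Proj m psi lam d f \- f) j = (j < d)%:R * coef m psi f j - coef m psi f j.
Proof.
have [L2p _] := onb.
move=> hf; rewrite -coef_Proj /coef /L2inner.
rewrite (_ : (fun t => (Proj m psi lam d f \- f) t * psi j t) =
   (fun t => Proj m psi lam d f t * psi j t - f t * psi j t)); last first.
  by apply/funext => t /=; rewrite mulrBl.
rewrite RintegralB //; last exact: int_prod.
by rewrite Proj_eq; exact: (proj1 (sum_psi m psi onb (fun i => Hinner m psi lam f (evec psi lam i) * Num.sqrt (lam i)) d j)).
Qed.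

End Aux2.
Lemma le_int_nm {dS : measure_display} {S : measurableType dS} {R : realType}
  (P : {measure set S -> \bar R}) (f g : S -> \bar R) :
  (forall x, (0 <= f x)%E) -> (forall x, (f x <= g x)%E) ->
  (\int[P]_x f x <= \int[P]_x g x)%E.
Proof.
move=> f0 fg; have g0 x : (0 <= g x)%E by apply: le_trans (fg x).
rewrite !ge0_integralTE//; apply: ereal_sup_le => _ [h hf <-]; exists h => //= x.
exact: le_trans (hf x) (fg x).
Qed.

Lemma pow_split {R : realType} (q s : R) (x : \bar R) : 0 < q -> q <= s ->
  (0 <= x)%E -> (poweR x (q/2) <= 1 + poweR x (s/2))%E.
Proof.
move=> q0 qs; case: x => [x| |] //= x0.
- rewrite lee_fin in x0; rewrite -EFinD lee_fin; case: (leP x 1) => hx.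
  + have h1 : powR x (q/2) <= powR 1 (q/2).
      by apply: ge0_ler_powR; rewrite ?nnegrE ?divr_ge0 // ltW.
    apply: le_trans h1 _.
    by rewrite powR1 lerDl powR_ge0.
  + have h2 : q/2 <= s/2 by rewrite ler_pM2r.
    apply: le_trans (ler_powR (ltW hx) h2) _.
    by rewrite lerDr.
- have s0 : 0 < s by apply: lt_le_trans qs.
  by rewrite !gt_eqF ?divr_gt0 // addey.
Qed.

Lemma lamd_bound {R : realType} (lam : nat -> R) (C gamma q : R) (d : nat) :
  0 < C -> 1 < gamma -> (forall j : nat, lam j <= C * powR (j.+1)%:R (- gamma)) ->
  (1 <= d)%N -> 0 <= q -> 0 <= lam d ->
  powR (lam d) (q/2) <= powR C (q/2) * powR d%:R (-(q * gamma / 2)).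
Proof.
move=> C0 g1 hlam d1 q0 l0.
have hd : lam d <= C * powR d%:R (- gamma).
  apply: le_trans (hlam d) _; rewrite ler_pM2l //.
  rewrite !powRN lef_pV2 ?posrE ?powR_gt0 ?ltr0n //.
  by apply: ge0_ler_powR; rewrite ?nnegrE ?ler0n ?ler_nat // ltW // (lt_trans ltr01).
apply: le_trans (ge0_ler_powR _ _ _ hd) _.
- by rewrite divr_ge0.
- by rewrite nnegrE.
- by rewrite nnegrE mulr_ge0 ?powR_ge0 ?ltW.
rewrite powRM ?powR_ge0 //; last exact: ltW.
rewrite -powRrM.
by have -> : - gamma * (q / 2) = - (q * gamma / 2) by ring.
Qed.
Section Aux4.
Context {dT : measure_display} {T : measurableType dT} {R : realType}.
Variable m : {measure set T -> \bar R}.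
Variables (psi : nat -> T -> R) (lam : nat -> R).
Hypothesis onb : ONB m psi.
Hypothesis lampos : forall j, 0 < lam j.
Hypothesis lamdec : forall i j, (i <= j)%N -> lam j <= lam i.

Lemma pt_bound f d q : inH m psi lam f -> 0 <= q ->
  ((powR (Hnorm m psi lam (Proj m psi lam d f \- f)) q)%:E <=
  poweR (lam d)%:E (q/2) *
    poweR (\sum_(j <oo) ((coef m psi f j ^+ 2 / lam j ^+ 2)%:E)) (q/2))%E.
Proof.
move=> [hf hfin] q0.
have hT j := @coef_diff _ _ _ m psi lam onb lampos f d j hf.
set a := coef m psi f in hT hfin *.
set Te := (\sum_(j <oo) ((coef m psi (Proj m psi lam d f \- f) j ^+ 2 / lam j)%:E))%E.
set Se := (\sum_(j <oo) ((a j ^+ 2 / lam j ^+ 2)%:E))%E.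
have term1 j : coef m psi (Proj m psi lam d f \- f) j ^+ 2 / lam j <=
    lam d * (a j ^+ 2 / lam j ^+ 2).
  rewrite hT; case: (ltnP j d) => h.
    rewrite mul1r subrr expr2 !mul0r.
    by apply: mulr_ge0; [exact: ltW | apply: divr_ge0; exact: sqr_ge0].
  rewrite mul0r sub0r sqrrN.
  have -> : a j ^+ 2 / lam j = lam j * (a j ^+ 2 / lam j ^+ 2).
    by field; rewrite gt_eqF.
  by apply: ler_wpM2r; [apply: divr_ge0; exact: sqr_ge0 | exact: lamdec].
have term2 j : coef m psi (Proj m psi lam d f \- f) j ^+ 2 / lam j <= a j ^+ 2 / lam j.
  rewrite hT; case: (ltnP j d) => h.
    rewrite mul1r subrr expr2 !mul0r.
    by apply: divr_ge0; [exact: sqr_ge0 | exact: ltW].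
  by rewrite mul0r sub0r sqrrN.
have Te0 : (0 <= Te)%E.
  by apply: nneseries_ge0 => n _ _; rewrite lee_fin divr_ge0 // ?sqr_ge0 // ltW.
have Se0 : (0 <= Se)%E.
  by apply: nneseries_ge0 => n _ _; rewrite lee_fin divr_ge0 // ?sqr_ge0.
have TeF : (Te < +oo)%E.
  apply: le_lt_trans hfin; apply: lee_nneseries => n *.
    by rewrite lee_fin divr_ge0 // ?sqr_ge0 // ltW.
  by rewrite lee_fin term2.
have TS : (Te <= (lam d)%:E * Se)%E.
  rewrite /Se -nneseriesZl; last by move=> n _; rewrite lee_fin divr_ge0 // ?sqr_ge0.
  apply: lee_nneseries => n *.
    by rewrite lee_fin divr_ge0 // ?sqr_ge0 // ltW.
  by rewrite -EFinM lee_fin term1.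
have Tfin : Te = (fine Te)%:E by rewrite fineK // ge0_fin_numE.
rewrite /Hnorm -/Te.
rewrite -powR12_sqrt ?fine_ge0 // -powRrM -poweR_EFin -Tfin.
have -> : 2^-1 * q = q/2 by rewrite mulrC.
rewrite -poweRM //; last by rewrite lee_fin ltW.
apply: gt0_ler_poweR => //.
- by rewrite divr_ge0.
- by rewrite in_itv /= Te0 leey.
- by rewrite in_itv /= mule_ge0 ?leey // lee_fin ltW.
Qed.

End Aux4.
Theorem lemma6p6 (dT : measure_display) (T : measurableType dT) (R : realType)
  (m : {measure set T -> \bar R}) (psi : nat -> T -> R) (lam : nat -> R)
  (p s C gamma : R) :
  ONB m psi ->
  (forall j, 0 < lam j) ->
  (forall i j, (i <= j)%N -> lam j <= lam i) ->
  lam @ \oo --> 0 ->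
  1 <= p -> 2 * p < s ->
  0 < C -> 1 < gamma ->
  (forall j : nat, lam j <= C * powR (j.+1)%:R (- gamma)) ->
  exists K : R -> R -> R,
    forall (dS : measure_display) (S : measurableType dS)
           (P : probability S R) (X : S -> T -> R),
      (forall w, inH m psi lam (X w)) ->
      (forall j, measurable_fun setT (fun w => coef m psi (X w) j)) ->
      (Mtilde m psi lam P X s < +oo)%E ->
      forall (d : nat) (q : R), (1 <= d)%N -> 1 <= q <= s ->
        (\int[P]_w (powR (Hnorm m psi lam
                           (Proj m psi lam d (X w) \- X w)) q)%:E
         <= (K q (fine (Mtilde m psi lam P X s))
               * powR d%:R (- (q * gamma / 2)))%:E)%E.
Proof.
move=> onb lampos lamdec _ p1 ps C0 g1 hlam.
exists (fun q M => powR C (q/2) * (1 + M)).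
move=> dS S P X hX hmeas hM d q d1 /andP[q1 qs].
have q0 : 0 < q by apply: lt_le_trans q1.
pose Se := fun w => (\sum_(j <oo) ((coef m psi (X w) j ^+ 2 / lam j ^+ 2)%:E))%E.
have Se0 w : (0 <= Se w)%E.
  by apply: nneseries_ge0 => n _ _; rewrite lee_fin divr_ge0 // ?sqr_ge0.
have mSe : measurable_fun setT Se.
  have := @ge0_emeasurable_sum _ S R setT
    (fun j w => ((coef m psi (X w) j ^+ 2 / lam j ^+ 2)%:E)%E) predT.
  apply.
    by move=> k x _ _; rewrite lee_fin divr_ge0 // ?sqr_ge0.
  move=> k _; apply/measurable_EFinP; apply: measurable_funM.
    exact: measurable_funX.
  exact: measurable_cst.
have mG : measurable_fun setT (fun w => poweR (Se w) (s/2)).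
  exact: measurableT_comp (measurable_poweR _) mSe.
set c := powR C (q/2) * powR d%:R (- (q * gamma / 2)).
have c0 : 0 <= c by rewrite mulr_ge0 ?powR_ge0.
have Hpt w : ((powR (Hnorm m psi lam (Proj m psi lam d (X w) \- X w)) q)%:E <=
    c%:E * (1 + poweR (Se w) (s/2)))%E.
  apply: le_trans (@pt_bound _ _ _ m psi lam onb lampos lamdec (X w) d q (hX w) (ltW q0)) _.
  apply: lee_pmul.
  - exact: poweR_ge0.
  - exact: poweR_ge0.
  - rewrite poweR_EFin lee_fin; apply: lamd_bound => //; first exact: ltW.
    exact: ltW (lampos d).
  - exact: (pow_split _ _ _ q0 qs (Se0 w)).
have f0 w : (0 <= (powR (Hnorm m psi lam (Proj m psi lam d (X w) \- X w)) q)%:E)%E.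
  by rewrite lee_fin powR_ge0.
apply: le_trans (le_int_nm P _ _ f0 Hpt) _.
rewrite ge0_integralZl_EFin //; last first.
    by apply: emeasurable_funD => //; exact: measurable_cst.
  by move=> x _; rewrite adde_ge0 // poweR_ge0.
rewrite ge0_integralD //; last by move=> x _; exact: poweR_ge0.
rewrite integral_cst //.
set mP := (X in (1 * X)%E).
have -> : mP = 1%E by rewrite /mP; exact: probability_setT.
rewrite mul1e.
have M0 : (0 <= Mtilde m psi lam P X s)%E.
  by apply: integral_ge0 => x _; exact: poweR_ge0.
have eM : (\int[P]_w poweR (Se w) (s/2) = (fine (Mtilde m psi lam P X s))%:E)%E.
  by rewrite fineK // ge0_fin_numE.
rewrite eM -EFinD -EFinM lee_fin /c.
by rewrite mulrAC.
Qed.
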